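(* Let $\mathcal{G}=(\mathcal{V},\mathcal{E})$ be a finite directed acyclic computational graph with input edges $\mathrm{in}_1,\dots,\mathrm{in}_k\in\mathcal{E}$ (each leaving a dummy source node) and a single output edge $\mathrm{out}\in\mathcal{E}$ (entering a dummy sink node). Each non-dummy node $v$ computes a scaled op: for a differentiable map $f_v$ of its incoming-edge values $(x_{v,u})_{(u,v)\in\mathcal{E}}$ with one vector output per outgoing edge, the node's forward map is $f^*_v=\alpha_v f_v$ and its backward map is $f^*_{\mathrm{grad},v}(x,(g_w)_w)_u=\beta_{v,u}\sum_{w:(v,w)\in\mathcal{E}}g_w^\top\frac{\partial f_v(x)_w}{\partial x_{v,u}}$, with nonzero scalars $\alpha_v,\beta_{v,u}$. Assume $\mathcal{G}$ is constraint-scaled: $\beta_{v,u}=\alpha_v$ for every edge $(u,v)$ that is not a cut-edge. Define forward values $z(\mathrm{in}_i)=x_i$, $z((u,v))=f^*_u(\{z((w,u))\})_v$, and let $F(x_1,\dots,x_k)=z(\mathrm{out})$. Define backward values $h(\mathrm{out})=g$, $h((u,v))=f^*_{\mathrm{grad},v}(\{z((u',v))\},\{h((v,r))\})_u$. Then for every $i$, every $x$ and every $g$, $$h(\mathrm{in}_i)=\beta_i\; g^\top\frac{\partial F(x_1,\dots,x_k)}{\partial x_i},\qquad \beta_i=\prod_{(u,v)\in\mathcal{E}^{\mathrm{cut}}(\mathrm{in}_i)}\frac{\beta_{v,u}}{\alpha_v},$$ where $\mathcal{E}^{\mathrm{cut}}(\mathrm{in}_i)$ is the set of edges $(u,v)$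 whose removal leaves no (undirected) path between the source node of $\mathrm{in}_i$ and the source node of $\mathrm{out}$. In particular the graph represents a scaled op (forward $F$, backward scales $\beta_i$).
   Context: A cut-edge of $\mathcal{G}$ is an edge whose removal disconnects the underlying undirected graph (a bridge). For an edge $(u,v)$, $x_{v,u}$ denotes the input of node $v$ carried by that edge, and $f_u(\dots)_v$ denotes node $u$'s output on edge $(u,v)$. All outputs of a node share the single forward scale $\alpha_v$. *)

(* Defs.v *)
From HB Require Import structures.
From mathcomp Require Import all_boot all_order all_algebra.
From mathcomp Require Import all_classical all_reals all_analysis.
Set Implicit Arguments. Unset Strict Implicit. Unset Printing Implicit Defensive.
Import Order.TTheory GRing.Theory Num.Theory.
Import numFieldNormedType.Exports.
Local Open Scope ring_scope.

Definition acyclic N (adj : rel 'I_N) : Prop :=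
  forall u v, adj u v -> ~~ connect adj v u.

Definition rem_edge N (adj : rel 'I_N) (a b : 'I_N) : rel 'I_N :=
  fun x y => (adj x y && ((x, y) != (a, b))) || (adj y x && ((y, x) != (a, b))).

Definition is_bridge N (adj : rel 'I_N) (u v : 'I_N) : bool :=
  ~~ connect (rem_edge adj u v) u v.

Definition cut_set N (adj : rel 'I_N) (p q : 'I_N) : {set 'I_N * 'I_N} :=
  [set e | adj e.1 e.2 && ~~ connect (rem_edge adj e.1 e.2) p q].

Definition nondummy N k (s : 'I_k -> 'I_N) (t v : 'I_N) : bool :=
  (v != t) && [forall i, s i != v].

(* A family of vectors (x_u)_{u < N}, x_u : 'rV_(p u), is represented by the
   concatenated row vector \mxrow_u x_u : 'rV_(\sum_u p u); block u is
   recovered with submxrow. *)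

Definition blkdir (R : realType) N (p : 'I_N -> nat) (u : 'I_N) (j : 'I_(p u))
  : 'rV[R]_(\sum_(u' < N) p u') :=
  \mxrow_(u' < N) \row_(j' < p u') ((u' == u) && (val j' == val j))%:R.

(* g^T (d phi(x) / d x_u) : the row vector whose j-th entry is
   sum_l g_l * d phi(x)_l / d (x_u)_j *)
Definition vjpblk (R : realType) N (p : 'I_N -> nat) m
  (phi : 'rV[R]_(\sum_(u' < N) p u') -> 'rV[R]_m)
  (x : 'rV[R]_(\sum_(u' < N) p u')) (u : 'I_N) (g : 'rV[R]_m) : 'rV[R]_(p u) :=
  \row_(j < p u) \sum_(l < m) g 0 l * (derive phi x (@blkdir R N p u j)) 0 l.

(* Main.v *)
Require Import Defs.
From HB Require Import structures.
From mathcomp Require Import all_boot all_order all_algebra.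
From mathcomp Require Import all_classical all_reals all_analysis.
Import Order.TTheory GRing.Theory Num.Theory.
Import numFieldNormedType.Exports.

Local Open Scope ring_scope.
From mathcomp Require Import ring lra.

Set Implicit Arguments. Unset Strict Implicit.

Lemma rem_sym N (adj : rel 'I_N) a b x y :
  rem_edge adj a b x y = rem_edge adj a b y x.
Proof. by rewrite /rem_edge orbC. Qed.

Lemma connect_rem_sym N (adj : rel 'I_N) a b x y :
  connect (rem_edge adj a b) x y = connect (rem_edge adj a b) y x.
Proof. apply: sym_connect_sym => z w; exact: rem_sym. Qed.

Lemma connect_rem_uv N (adj : rel 'I_N) u v x :
  acyclic adj -> adj u v -> connect adj x u -> connect (rem_edge adj u v) x u.
Proof.
move=> Hac Huv /connectP [p Hp Hl].
elim: p x Hp Hl => [|z p IH] x /= Hp Hl.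
  by rewrite Hl connect0.
move/andP: Hp => [Hxz Hp].
have Hzu : connect adj z u by apply/connectP; exists p.
have Hr : rem_edge adj u v x z.
  rewrite /rem_edge Hxz /=; apply/orP; left.
  apply: contraTneq Hzu => -[_ ->]; exact: Hac.
exact: (connect_trans (connect1 Hr) (IH _ Hp Hl)).
Qed.

Lemma connect_rem_other N (adj : rel 'I_N) u v (e : 'I_N * 'I_N) x :
  adj u v -> e != (u, v) ->
  connect (rem_edge adj e.1 e.2) x u = connect (rem_edge adj e.1 e.2) x v.
Proof.
move=> Huv He.
have Hr : rem_edge adj e.1 e.2 u v.
  by rewrite /rem_edge Huv /=; apply/orP; left; rewrite eq_sym; case: e He.
apply/idP/idP => H.
  exact: (connect_trans H (connect1 Hr)).
by apply: (connect_trans H); apply: connect1; rewrite rem_sym.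
Qed.

Lemma cut_set_step N (adj : rel 'I_N) u v p :
  acyclic adj -> adj u v -> connect adj p u ->
  (u, v) \notin cut_set adj p u /\
  cut_set adj p v = if is_bridge adj u v then (u, v) |: cut_set adj p u
                    else cut_set adj p u.
Proof.
move=> Hac Huv Hpu.
have Hr := connect_rem_uv Hac Huv Hpu.
split; first by rewrite inE /= Hr andbF.
have He : forall e : 'I_N * 'I_N, e != (u, v) ->
    (e \in cut_set adj p v) = (e \in cut_set adj p u).
  move=> e He; rewrite !inE; congr (_ && ~~ _).
  by rewrite (connect_rem_other p Huv He).
case Hb: (is_bridge adj u v).
  all: idtac.
  apply/setP => e; rewrite in_setU1.
  case: (eqVneq e (u, v)) => [->|Hne] /=; last exact: He.
  rewrite inE /= Huv /=; apply: contraNN Hb => H.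
  by apply: connect_trans H; rewrite connect_rem_sym.
apply/setP => e.
case: (eqVneq e (u, v)) => [->|Hne] /=; last exact: He.
rewrite !inE /= Hr andbF Huv /=.
move: Hb; rewrite /is_bridge => /negbFE H.
by rewrite (connect_trans Hr H).
Qed.

Lemma dag_ind N (adj : rel 'I_N) (P : 'I_N -> Prop) :
  acyclic adj ->
  (forall u, (forall w, adj w u -> P w) -> P u) -> forall u, P u.
Proof.
move=> Hac IH.
suff H : forall c u, (#|[pred w | connect adj w u]| < c)%N -> P u.
  by move=> u; apply: (H _ u (ltnSn _)).
elim=> [//|c IHc] u Hu; apply: IH => w Hwu; apply: IHc.
have Hlt : (#|[pred x | connect adj x w]| < #|[pred x | connect adj x u]|)%N.
  apply: proper_card; apply/properP; split.
    apply/fintype.subsetP => x; rewrite !inE => Hx; exact: (connect_trans Hx (connect1 Hwu)).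
  exists u; rewrite !inE ?connect0 //; exact: Hac.
exact: leq_trans Hlt Hu.
Qed.
Lemma rV0E (R : realType) m (H : m = 0%N) (x : 'rV[R]_m) : x = 0.
Proof. apply/rowP => j; have := ltn_ord j; by rewrite {2}H. Qed.

Lemma diff_mx_entries (R : realType) (V : normedModType R) p q
  (M : V -> 'M[R]_(p, q)) x :
  (forall i j, differentiable (fun y => M y i j) x) -> differentiable M x.
Proof.
move=> H.
have -> : M = \sum_(i < p) \sum_(j < q) (fun y => M y i j *: delta_mx i j).
  apply/funext => y; rewrite fct_sumE [LHS]matrix_sum_delta.
  by apply: eq_bigr => i _; rewrite fct_sumE.
apply: differentiable_sum => i; apply: differentiable_sum => j.
exact: differentiableZl.
Qed.

Lemma diff_entry (R : realType) (V : normedModType R) p q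
  (M : V -> 'M[R]_(p, q)) x i j :
  differentiable M x -> differentiable (fun y => M y i j) x.
Proof.
move=> dM; apply: (@differentiable_comp _ _ _ _ M (fun N : 'M[R]_(p,q) => N i j)) => //.
exact: differentiable_coord.
Qed.

Lemma derive_entry (R : realType) (V : normedModType R) p q
  (M : V -> 'M[R]_(p, q)) x v i j :
  differentiable M x -> ('D_v M x) i j = 'D_v (fun y => M y i j) x.
Proof.
move=> dM; rewrite derive_mx ?mxE //; exact: diff_derivable.
Qed.

Lemma derive_lin (R : realType) (V W : normedModType R) (F : V -> W) x :
  differentiable F x -> linear (fun v => 'D_v F x).
Proof. move=> dF c u w; rewrite !deriveE //; exact: linearP. Qed.
Lemma diff_submxrow (R : realType) (V : normedModType R) q (q_ : 'I_q -> nat) m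
  (G : V -> 'M[R]_(m, \sum_(w < q) q_ w)) x v :
  differentiable G x -> differentiable (fun y => submxrow (G y) v) x.
Proof.
move=> dG; apply: diff_mx_entries => i l.
rewrite (_ : (fun y => _) = (fun y => G y i (tagnat.Rank v l))); last first.
  by apply/funext => y; rewrite mxE.
exact: diff_entry.
Qed.

Lemma diff_mxrow (R : realType) (V : normedModType R) q (q_ : 'I_q -> nat) m
  (G : forall w, V -> 'M[R]_(m, q_ w)) x :
  (forall w, differentiable (G w) x) -> differentiable (fun y => \mxrow_w G w y) x.
Proof.
move=> dG; apply: diff_mx_entries => i l.
rewrite (_ : (fun y => _) = (fun y => G (tagnat.sig1 l) y i (tagnat.sig2 l))); last first.
  by apply/funext => y; rewrite mxE.
exact: diff_entry.
Qed.

Lemma derive_submxrow (R : realType) (V : normedModType R) q (q_ : 'I_q -> nat) m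
  (G : V -> 'M[R]_(m, \sum_(w < q) q_ w)) x v d :
  differentiable G x -> 'D_d (fun y => submxrow (G y) v) x = submxrow ('D_d G x) v.
Proof.
move=> dG; apply/matrixP => i l.
rewrite (@derive_entry R V m (q_ v) (fun y => submxrow (G y) v)); last exact: diff_submxrow.
rewrite [RHS]mxE (@derive_entry R V m _ G) //.
have -> : (fun y => submxrow (G y) v i l) = (fun y => G y i (tagnat.Rank v l)).
  by apply/funext => y; rewrite mxE.
by [].
Qed.

Lemma derive_mxrow (R : realType) (V : normedModType R) q (q_ : 'I_q -> nat) m
  (G : forall w, V -> 'M[R]_(m, q_ w)) x d :
  (forall w, differentiable (G w) x) ->
  'D_d (fun y => \mxrow_w G w y) x = \mxrow_w 'D_d (G w) x.
Proof.
move=> dG; apply/matrixP => i l.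
rewrite (@derive_entry R V m _ (fun y => \mxrow_w G w y)); last exact: diff_mxrow.
rewrite [RHS]mxE (@derive_entry R V m _ (G _)) //.
have -> : (fun y => (\mxrow_w G w y) i l) = (fun y => G (tagnat.sig1 l) y i (tagnat.sig2 l)).
  by apply/funext => y; rewrite mxE.
by [].
Qed.
Lemma derive_comp (R : realType) (U V W : normedModType R) (G : U -> V) (F : V -> W) x d :
  differentiable G x -> differentiable F (G x) ->
  'D_d (F \o G) x = 'D_('D_d G x) F (G x).
Proof.
move=> dG dF; rewrite !deriveE //; last exact: differentiable_comp.
by rewrite diff_comp.
Qed.

Lemma derive_scale (R : realType) (U V : normedModType R) (G : U -> V) (c : R) x d :
  differentiable G x -> 'D_d (fun y => c *: G y) x = c *: 'D_d G x.
Proof.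
move=> dG; rewrite -deriveZ //; exact: diff_derivable.
Qed.

Lemma diff_scale (R : realType) (U V : normedModType R) (G : U -> V) (c : R) x :
  differentiable G x -> differentiable (fun y => c *: G y) x.
Proof. move=> dG; exact: differentiableZ. Qed.

Lemma diff_id' (R : realType) (U : normedModType R) (x : U) : differentiable id x.
Proof. by apply: (@linear_differentiable _ _ _ idfun) => ? //. Qed.

Lemma sum_empty (R : realType) m (H : m = 0%N) (F : 'I_m -> R) : \sum_(l < m) F l = 0.
Proof. apply: big1 => l _; have := ltn_ord l; by rewrite {2}H. Qed.

Lemma derive_sum2 (R : realType) (V W : normedModType R) (F : V -> W) x
   q (p_ : 'I_q -> nat) (c : forall i, 'I_(p_ i) -> R) (b : forall i, 'I_(p_ i) -> V) :
  differentiable F x ->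
  'D_(\sum_(i < q) \sum_(j < p_ i) c i j *: b i j) F x =
   \sum_(i < q) \sum_(j < p_ i) c i j *: 'D_(b i j) F x.
Proof.
move=> dF; rewrite deriveE // linear_sum; apply: eq_bigr => i _.
rewrite linear_sum; apply: eq_bigr => j _; by rewrite linearZ deriveE.
Qed.

Lemma mxrow_blkdir (R : realType) N (p : 'I_N -> nat) (D : forall u, 'rV[R]_(p u)) :
  \mxrow_(u < N) D u = \sum_(u < N) \sum_(l < p u) D u 0 l *: @blkdir R N p u l.
Proof.
apply/matrixP => i0 kk; rewrite !mxE summxE (bigD1 (tagnat.sig1 kk)) //=.
rewrite [X in _ + X]big1 ?addr0; last first.
  move=> u Hu; rewrite summxE big1 // => l _; rewrite !mxE.
  by rewrite eq_sym (negbTE Hu) /= mulr0.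
rewrite summxE (bigD1 (tagnat.sig2 kk)) //= [X in _ + X]big1 ?addr0; last first.
  move=> l Hl; rewrite !mxE eqxx /=.
  have -> : (val (tagnat.sig2 kk) == val l) = false.
    by apply/negbTE; apply: contraNneq Hl => /val_inj ->.
  by rewrite mulr0.
by rewrite !mxE !eqxx mulr1 (ord1 i0).
Qed.

Lemma derive_mxrow_dec (R : realType) (W : normedModType R) N (p : 'I_N -> nat)
  (D : forall u, 'rV[R]_(p u)) (F : 'rV[R]_(\sum_(u < N) p u) -> W) x :
  differentiable F x ->
  'D_(\mxrow_(u < N) D u) F x =
   \sum_(u < N) \sum_(l < p u) D u 0 l *: 'D_(@blkdir R N p u l) F x.
Proof.
move=> dF; rewrite mxrow_blkdir.
exact: (@derive_sum2 R _ _ F x N p (fun u l => D u 0 l) (fun u l => @blkdir R N p u l) dF).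
Qed.

Lemma sum2_pick (R : realType) N (F : 'I_N -> 'I_N -> R) p q :
  \sum_(u < N) \sum_(v < N) (if (u == p) && (v == q) then F u v else 0) = F p q.
Proof.
rewrite (bigD1 p) //= [X in _ + X]big1 => [|u Hu]; last first.
  by apply: big1 => v _; rewrite (negbTE Hu).
rewrite addr0 (bigD1 q) //= [X in _ + X]big1 => [|v Hv]; first by rewrite !eqxx addr0.
by rewrite eqxx (negbTE Hv).
Qed.

Lemma submxrow_blkdir (R : realType) N (p : 'I_N -> nat) u j u' :
  submxrow (@blkdir R N p u j) u' = \row_(l < p u') ((u' == u) && (val l == val j))%:R.
Proof. by rewrite /blkdir mxrowK. Qed.

Unset Implicit Arguments. Set Strict Implicit.


Section Main.
Variables (R : realType) (N : nat) (adj : rel 'I_N)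
  (k : nat) (s a : 'I_k -> 'I_N) (o t : 'I_N)
  (n : 'I_N -> 'I_N -> nat)
  (f : forall v : 'I_N, 'rV[R]_(\sum_(u < N) n u v) -> 'rV[R]_(\sum_(w < N) n v w))
  (alpha : 'I_N -> R) (beta : 'I_N -> 'I_N -> R).
Hypothesis Hac : acyclic adj.
Hypothesis Hn0 : forall u v, ~~ adj u v -> n u v = 0%N.
Hypothesis Hsinj : injective s.
Hypothesis Hst : forall i, s i != t.
Hypothesis Hsa : forall i w, adj (s i) w = (w == a i).
Hypothesis Hins : forall i u, ~~ adj u (s i).
Hypothesis Hto : forall u, adj u t = (u == o).
Hypothesis Htout : forall w, ~~ adj t w.
Hypothesis Hfd : forall v, nondummy s t v -> forall x, differentiable (f v) x.
Hypothesis Hal : forall v, nondummy s t v -> alpha v != 0.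
Hypothesis Hbe : forall u v, adj u v -> nondummy s t v -> beta v u != 0.
Hypothesis Hbr : forall u v, adj u v -> nondummy s t v -> ~~ is_bridge adj u v ->
     beta v u = alpha v.
Variable Z : 'rV[R]_(\sum_(i < k) n (s i) (a i)) -> forall u v : 'I_N, 'rV[R]_(n u v).
Hypothesis HZin : forall X i, Z X (s i) (a i) = submxrow X i.
Hypothesis HZ : forall X u v, adj u v -> nondummy s t u ->
     Z X u v = alpha u *: submxrow (f u (\mxrow_(w < N) Z X w u)) v.

Local Notation XT := 'rV[R]_(\sum_(i < k) n (s i) (a i)).
Local Notation P u Y := (\mxrow_(w < N) Z Y w u).

Lemma nd_cases u : nondummy s t u \/ u = t \/ exists i, u = s i.
Proof.
rewrite /nondummy; case: (eqVneq u t) => [->|ut]; first by right; left.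
case Hf: [forall i, s i != u]; first by left.
right; right; move/negbT: Hf; rewrite negb_forall => /existsP [i /negPn /eqP Hi].
by exists i.
Qed.

Lemma Zcst u v Y : ~~ adj u v -> Z Y u v = 0.
Proof. move=> H; apply: rV0E; exact: Hn0. Qed.

Lemma Zdiff u v (Y : XT) : differentiable (fun X => Z X u v) Y.
Proof.
move: u v Y; apply: (dag_ind Hac) => u IH v Y.
case Huv: (adj u v); last first.
  rewrite (_ : (fun X => Z X u v) = cst 0); first exact: differentiable_cst.
  by apply/funext => X; rewrite Zcst ?Huv.
case: (nd_cases u) => [Hu|[Hu|[i Hu]]].
- rewrite (_ : (fun X => Z X u v) =
     (fun X => alpha u *: submxrow (f u (P u X)) v)); last first.
    by apply/funext => X; rewrite HZ.
  apply: diff_scale; apply: diff_submxrow.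
  apply: (@differentiable_comp _ _ _ _ (fun X => P u X) (f u)); last exact: Hfd.
  apply: diff_mxrow => w.
  case Hwu: (adj w u); first exact: IH.
  rewrite (_ : (fun X => Z X w u) = cst 0); first exact: differentiable_cst.
  by apply/funext => X; rewrite Zcst ?Hwu.
- by move: Huv; rewrite Hu (negbTE (Htout _)).
- subst u; move: Huv; rewrite Hsa => /eqP Hv; subst v.
  rewrite (_ : (fun X => Z X (s i) (a i)) = (fun X => submxrow (id X) i)).
    by apply: diff_submxrow; exact: diff_id'.
  by apply/funext => X; rewrite HZin.
Qed.

Section Deriv.
Variable X : XT.

Definition Dir (d : XT) u v : 'rV[R]_(n u v) := 'D_d (fun Y => Z Y u v) X.

Lemma Dir_cst d u v : ~~ adj u v -> Dir d u v = 0.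
Proof.
move=> H; rewrite /Dir (_ : (fun Y => Z Y u v) = cst 0) ?derive_cst //.
by apply/funext => Y; rewrite Zcst.
Qed.

Lemma Dir_in d i : Dir d (s i) (a i) = submxrow d i.
Proof.
rewrite /Dir (_ : (fun Y => Z Y (s i) (a i)) = (fun Y => submxrow (id Y) i)).
  by rewrite derive_submxrow ?derive_id //; exact: diff_id'.
by apply/funext => Y; rewrite HZin.
Qed.

Lemma DP d u : 'D_d (fun Y => P u Y) X = \mxrow_(w < N) Dir d w u.
Proof. by rewrite derive_mxrow // => w; exact: Zdiff. Qed.

Lemma Dir_nd d u v : adj u v -> nondummy s t u ->
  Dir d u v = alpha u *: submxrow ('D_(\mxrow_(w < N) Dir d w u) (f u) (P u X)) v.
Proof.
move=> Huv Hu; rewrite /Dir.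
rewrite (_ : (fun X => Z X u v) =
     (fun X => alpha u *: submxrow (f u (P u X)) v)); last first.
  by apply/funext => Y; rewrite HZ.
have dP : differentiable (fun Y => P u Y) X.
  by apply: diff_mxrow => w; exact: Zdiff.
have dF : differentiable (f u \o (fun Y => P u Y)) X.
  by apply: differentiable_comp => //; exact: Hfd.
rewrite derive_scale; last exact: diff_submxrow.
rewrite (derive_submxrow _ _ dF).
rewrite (derive_comp _ dP); last exact: Hfd.
by rewrite DP.
Qed.

Lemma Dir_unreach d i : (forall i', i' != i -> submxrow d i' = 0) ->
  forall u, ~~ connect adj (s i) u -> forall v, Dir d u v = 0.
Proof.
move=> Hd; apply: (dag_ind Hac) => u IH Hcon v.
case Huv: (adj u v); last by rewrite Dir_cst ?Huv.
case: (nd_cases u) => [Hu|[Hu|[i' Hu]]].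
- rewrite Dir_nd //.
  rewrite (_ : \mxrow_(w < N) Dir d w u = 0) ?derive0 ?submxrow0 ?scaler0 //.
  have H0 : forall w, Dir d w u = 0.
    move=> w; case Hwu: (adj w u); last by rewrite Dir_cst ?Hwu.
    apply: IH => //; apply: contraNN Hcon => Hc.
    exact: connect_trans Hc (connect1 Hwu).
  by apply/matrixP => i0 l; rewrite !mxE H0 mxE.
- by move: Huv; rewrite Hu (negbTE (Htout _)).
- subst u; move: Huv; rewrite Hsa => /eqP Hv; subst v.
  rewrite Dir_in Hd //; apply: contraNneq Hcon => ->; exact: connect0.
Qed.


Variable h : forall u v : 'I_N, 'rV[R]_(n u v).
Hypothesis Hh : forall u v, adj u v -> nondummy s t v ->
     h u v = beta v u *: \sum_(w < N | adj v w)
               vjpblk (fun y => submxrow (f v y) w) (\mxrow_(u' < N) Z X u' v) u (h v w).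

Definition T d u v := \sum_(l < n u v) h u v 0 l * Dir d u v 0 l.

Lemma T_cst d u v : ~~ adj u v -> T d u v = 0.
Proof. by move=> H; rewrite /T sum_empty //; exact: Hn0. Qed.

Lemma vjp_entry v w u (gg : 'rV[R]_(n v w)) j : nondummy s t v ->
  (vjpblk (fun y => submxrow (f v y) w) (P v X) u gg) 0 j =
  \sum_(l < n v w) gg 0 l *
     ('D_(@blkdir R N (fun u' => n u' v) u j) (f v) (P v X)) 0 (tagnat.Rank w l).
Proof.
move=> Hv; rewrite mxE; apply: eq_bigr => l _.
by rewrite derive_submxrow ?mxE //; exact: Hfd.
Qed.

Lemma vjp_nonadj v w u : ~~ adj v w ->
  vjpblk (fun y => submxrow (f v y) w) (P v X) u (h v w) = 0.
Proof. by move=> H; apply/rowP => j; rewrite !mxE sum_empty //; exact: Hn0. Qed.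

Lemma h_full u v : adj u v -> nondummy s t v ->
  h u v = beta v u *: \sum_(w < N)
               vjpblk (fun y => submxrow (f v y) w) (P v X) u (h v w).
Proof.
move=> Huv Hv; rewrite Hh // [in RHS](bigID (adj v)) /=.
by rewrite [X in _ + X]big1 ?addr0 // => w Hw; rewrite vjp_nonadj.
Qed.

Lemma node_id d v : nondummy s t v ->
  \sum_(u < N) T d u v / (beta v u / alpha v) = \sum_(w < N) T d v w.
Proof.
move=> Hv.
pose Kf u l := 'D_(@blkdir R N (fun u' => n u' v) u l) (f v) (P v X).
have S1 : forall u, T d u v / (beta v u / alpha v) =
  alpha v * \sum_(l < n u v) Dir d u v 0 l *
     \sum_(w < N) \sum_(m < n v w) h v w 0 m * Kf u l 0 (tagnat.Rank w m).
  move=> u; case Huv: (adj u v); last first.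
    by rewrite T_cst ?Huv // mul0r sum_empty ?mulr0 // Hn0 ?Huv.
  rewrite /T.
  have -> : \sum_(l < n u v) h u v 0 l * Dir d u v 0 l =
     beta v u * \sum_(l < n u v) Dir d u v 0 l *
     \sum_(w < N) \sum_(m < n v w) h v w 0 m * Kf u l 0 (tagnat.Rank w m).
    rewrite mulr_sumr; apply: eq_bigr => l _.
    rewrite h_full // !mxE summxE.
    rewrite (mulrC (Dir d u v 0 l)) mulrA; congr (_ * _ * _).
    by apply: eq_bigr => w _; rewrite vjp_entry.
  have Hb := Hbe _ _ Huv Hv; have Ha := Hal _ Hv.
  by field; rewrite Hb Ha.
have S2 : forall w, T d v w =
  alpha v * \sum_(m < n v w) h v w 0 m *
     \sum_(u < N) \sum_(l < n u v) Dir d u v 0 l * Kf u l 0 (tagnat.Rank w m).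
  move=> w; case Hvw: (adj v w); last first.
    by rewrite T_cst ?Hvw // sum_empty ?mulr0 // Hn0 ?Hvw.
  rewrite /T mulr_sumr; apply: eq_bigr => m _.
  rewrite Dir_nd // derive_mxrow_dec; last exact: Hfd.
  rewrite !mxE summxE mulrCA; congr (_ * (_ * _)).
  apply: eq_bigr => u _; rewrite summxE; apply: eq_bigr => l _.
  by rewrite !mxE.
rewrite (eq_bigr _ (fun u _ => S1 u)) (eq_bigr _ (fun w _ => S2 w)).
rewrite -!mulr_sumr; congr (_ * _).
transitivity (\sum_(u < N) \sum_(w < N) \sum_(l < n u v) \sum_(m < n v w)
   Dir d u v 0 l * (h v w 0 m * Kf u l 0 (tagnat.Rank w m))).
  apply: eq_bigr => u _; rewrite [RHS]exchange_big; apply: eq_bigr => l _.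
  rewrite mulr_sumr; apply: eq_bigr => w _; by rewrite mulr_sumr.
rewrite [LHS]exchange_big; apply: eq_bigr => w _.
transitivity (\sum_(u < N) \sum_(m < n v w) \sum_(l < n u v)
   Dir d u v 0 l * (h v w 0 m * Kf u l 0 (tagnat.Rank w m))).
  by apply: eq_bigr => u _; rewrite exchange_big.
rewrite [LHS]exchange_big; apply: eq_bigr => m _.
rewrite mulr_sumr; apply: eq_bigr => u _.
rewrite mulr_sumr; apply: eq_bigr => l _.
by rewrite mulrCA.
Qed.

Lemma nd_ne_s u i : nondummy s t u -> (u == s i) = false.
Proof.
move=> /andP [_ /forallP H]; apply/negbTE; rewrite eq_sym; exact: H.
Qed.

Lemma nd_ne_t u : nondummy s t u -> (u == t) = false.
Proof. by move=> /andP [H _]; apply/negbTE. Qed.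

Lemma nd_s i : nondummy s t (s i) = false.
Proof.
apply/negbTE; rewrite /nondummy negb_and; apply/orP; right.
rewrite negb_forall; apply/existsP; exists i; by rewrite eqxx.
Qed.

Lemma nd_t : nondummy s t t = false.
Proof. by rewrite /nondummy eqxx. Qed.

Definition lam i v := \prod_(e in cut_set adj (s i) v) (beta e.2 e.1 / alpha e.2).

Lemma lam_s i : lam i (s i) = 1.
Proof.
rewrite /lam (_ : cut_set adj (s i) (s i) = finset.set0) ?big_set0 //.
by apply/setP => e; rewrite !inE connect0 andbF.
Qed.

Lemma lam_step i u v : adj u v -> nondummy s t v -> connect adj (s i) u ->
  lam i v = lam i u * (beta v u / alpha v).
Proof.
move=> Huv Hv Hc; have [Hn Hcs] := cut_set_step Hac Huv Hc.
rewrite /lam Hcs; case Hb: (is_bridge adj u v).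
  by rewrite big_setU1 //= mulrC.
rewrite Hbr ?Hb // divff ?mulr1 //; exact: Hal.
Qed.

Variables (i : 'I_k) (j : 'I_(n (s i) (a i))).
Local Notation d := (@blkdir R k (fun i' => n (s i') (a i')) i j).

Lemma Hd i' : i' != i -> submxrow d i' = 0.
Proof.
move=> H; apply/rowP => l; rewrite submxrow_blkdir !mxE.
by rewrite (negbTE H).
Qed.

Lemma Dir_s_other i' v : i' != i -> Dir d (s i') v = 0.
Proof.
move=> H; case Hv: (adj (s i') v); last by rewrite Dir_cst ?Hv.
move: Hv; rewrite Hsa => /eqP ->; by rewrite Dir_in Hd.
Qed.

Lemma T_in : T d (s i) (a i) = h (s i) (a i) 0 j.
Proof.
rewrite /T Dir_in submxrow_blkdir (bigD1 j) //= [X in _ + X]big1 => [|l Hl].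
  by rewrite !mxE !eqxx mulr1 addr0.
rewrite !mxE eqxx /=.
have -> : (val l == val j) = false by apply/negbTE; apply: contraNneq Hl => /val_inj ->.
by rewrite mulr0.
Qed.

Lemma pointwise u v :
  (if nondummy s t v then lam i v * (T d u v / (beta v u / alpha v)) else 0) -
  (if nondummy s t u then lam i u * T d u v else 0) =
  (if (u == s i) && (v == a i) then (if nondummy s t v then T d u v else 0) else 0) -
  (if (u == o) && (v == t) then (if nondummy s t u then lam i u * T d u v else 0) else 0).
Proof.
case Huv: (adj u v); last first.
  have C1 : ((u == s i) && (v == a i)) = false.
    by apply/negbTE; apply: contraFN Huv => /andP [/eqP -> /eqP ->]; rewrite Hsa.
  have C2 : ((u == o) && (v == t)) = false.
    by apply/negbTE; apply: contraFN Huv => /andP [/eqP -> /eqP ->]; rewrite Hto.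
  by rewrite C1 C2 T_cst ?Huv // !mul0r !mulr0 !if_same.
case: (nd_cases u) => [Hu|[Hu|[i' Hu]]].
- rewrite Hu (nd_ne_s u i Hu) /=.
  case: (nd_cases v) => [Hv|[Hv|[i'' Hv]]].
  + rewrite Hv (nd_ne_t v Hv) andbF subr0.
    case Hc: (connect adj (s i) u).
      rewrite (lam_step i u v Huv Hv Hc).
      have Hb := Hbe _ _ Huv Hv; have Ha := Hal _ Hv.
      by field; rewrite Hb Ha.
    have HT : T d u v = 0.
      rewrite /T.
      have H0 := @Dir_unreach d i Hd u (negbT Hc) v.
      rewrite H0.
      by apply: big1 => l _; rewrite mxE mulr0.
    by rewrite HT !mul0r !mulr0 subrr.
  + move: Huv; rewrite Hv Hto => /eqP Hu'; subst u v.
    by rewrite nd_t !eqxx /=.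
  + by move: Huv; rewrite Hv (negbTE (Hins _ _)).
- by move: Huv; rewrite Hu (negbTE (Htout _)).
- subst u; move: Huv; rewrite Hsa => /eqP Hv; subst v.
  rewrite nd_s /= subr0 if_same subr0.
  case: (eqVneq i' i) => [->|Hne].
    rewrite !eqxx /=; case Hv: (nondummy s t (a i)) => //.
    have Ha : adj (s i) (a i) by rewrite Hsa.
    rewrite (lam_step i (s i) (a i) Ha Hv (connect0 _ _)) lam_s mul1r.
    have Hb := Hbe _ _ Ha Hv; have Hal' := Hal _ Hv.
    by field; rewrite Hb Hal'.
  have HT : T d (s i') (a i') = 0.
    by rewrite /T Dir_s_other //; apply: big1 => l _; rewrite mxE mulr0.
  rewrite HT (inj_eq Hsinj) (negbTE Hne) /= mul0r mulr0.
  by rewrite if_same.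
Qed.

Lemma total :
  (if nondummy s t (a i) then T d (s i) (a i) else 0) -
  (if nondummy s t o then lam i o * T d o t else 0) = 0.
Proof.
have E1 := sum2_pick (fun u v => if nondummy s t v then T d u v else 0) (s i) (a i).
have E2 := sum2_pick (fun u v => if nondummy s t u then lam i u * T d u v else 0) o t.
rewrite /= in E1 E2.
rewrite -E1 -E2 -sumrB.
transitivity (\sum_(u < N) \sum_(v < N)
   ((if nondummy s t v then lam i v * (T d u v / (beta v u / alpha v)) else 0) -
    (if nondummy s t u then lam i u * T d u v else 0))).
  apply: eq_bigr => u _; rewrite -sumrB; apply: eq_bigr => v _.
  by rewrite pointwise.
under eq_bigr do rewrite sumrB.
rewrite sumrB; apply/eqP; rewrite subr_eq0; apply/eqP.
rewrite exchange_big /=.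
transitivity (\sum_(v < N) (if nondummy s t v then lam i v * \sum_(u < N) T d u v / (beta v u / alpha v) else 0)).
  apply: eq_bigr => v _; case: ifP => Hv; first by rewrite mulr_sumr.
  by rewrite big1.
apply: eq_bigr => v _; case: ifP => Hv; last by rewrite big1.
by rewrite node_id // mulr_sumr.
Qed.

Lemma final_T : h (s i) (a i) 0 j = lam i o * T d o t.
Proof.
have Htot := total.
case: (nd_cases o) => [Ho|[Ho|[i'' Ho]]].
- case: (nd_cases (a i)) => [Hai|[Hai|[i3 Hai]]].
  + by move: Htot; rewrite Hai Ho T_in => /eqP; rewrite subr_eq0 => /eqP.
  + have : adj (s i) t by rewrite Hsa Hai.
    by rewrite Hto => /eqP Hso; move: Ho; rewrite -Hso nd_s.
  + by have := Hins i3 (s i); rewrite -Hai Hsa eqxx.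
- by have := Hto t; rewrite Ho eqxx (negbTE (Htout t)).
- have Hot : adj o t by rewrite Hto.
  case: (eqVneq i'' i) => [Hii|Hne].
    have Ht : t = a i by move: Hot; rewrite Ho Hii Hsa => /eqP.
    have key : forall o' t', o' = s i -> t' = a i ->
        h (s i) (a i) 0 j = lam i o' * T d o' t'.
      by move=> o' t' -> ->; rewrite lam_s mul1r T_in.
    by apply: key; rewrite ?Ho ?Hii.
  have HT : T d o t = 0.
    by rewrite /T Ho Dir_s_other //; apply: big1 => l _; rewrite mxE mulr0.
  rewrite HT mulr0.
  have Hai : nondummy s t (a i).
    case: (nd_cases (a i)) => [//|[Hai|[i3 Hai]]].
      have : adj (s i) t by rewrite Hsa Hai.
      rewrite Hto Ho => /eqP /Hsinj Hii; by move: Hne; rewrite Hii eqxx.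
    by have := Hins i3 (s i); rewrite -Hai Hsa eqxx.
  move: Htot; rewrite Hai Ho nd_s subr0 T_in; done.
Qed.
End Deriv. End Main.

Theorem mainTheorem3 (R : realType) (N : nat) (adj : rel 'I_N)
  (k : nat) (s a : 'I_k -> 'I_N) (o t : 'I_N)
  (n : 'I_N -> 'I_N -> nat)
  (f : forall v : 'I_N, 'rV[R]_(\sum_(u < N) n u v) -> 'rV[R]_(\sum_(w < N) n v w))
  (alpha : 'I_N -> R) (beta : 'I_N -> 'I_N -> R) :
  acyclic adj ->
  (forall u v, ~~ adj u v -> n u v = 0%N) ->
  injective s ->
  (forall i, s i != t) ->
  (forall i w, adj (s i) w = (w == a i)) ->
  (forall i u, ~~ adj u (s i)) ->
  (forall u, adj u t = (u == o)) ->
  (forall w, ~~ adj t w) ->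
  (forall v, nondummy s t v -> forall x, differentiable (f v) x) ->
  (forall v, nondummy s t v -> alpha v != 0) ->
  (forall u v, adj u v -> nondummy s t v -> beta v u != 0) ->
  (forall u v, adj u v -> nondummy s t v -> ~~ is_bridge adj u v ->
     beta v u = alpha v) ->
  forall Z : 'rV[R]_(\sum_(i < k) n (s i) (a i)) -> forall u v : 'I_N, 'rV[R]_(n u v),
  (forall X i, Z X (s i) (a i) = submxrow X i) ->
  (forall X u v, adj u v -> nondummy s t u ->
     Z X u v = alpha u *: submxrow (f u (\mxrow_(w < N) Z X w u)) v) ->
  forall (X : 'rV[R]_(\sum_(i < k) n (s i) (a i))) (g : 'rV[R]_(n o t))
         (h : forall u v : 'I_N, 'rV[R]_(n u v)),
  h o t = g ->
  (forall u v, adj u v -> nondummy s t v ->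
     h u v = beta v u *: \sum_(w < N | adj v w)
               vjpblk (fun y => submxrow (f v y) w) (\mxrow_(u' < N) Z X u' v) u (h v w)) ->
  differentiable (fun Y => Z Y o t) X /\
  forall i : 'I_k,
    h (s i) (a i) =
      (\prod_(e in cut_set adj (s i) o) (beta e.2 e.1 / alpha e.2)) *:
        vjpblk (fun Y => Z Y o t) X i g.
Proof.
Proof.
move=> Hac Hn0 Hsinj Hst Hsa Hins Hto Htout Hfd Hal Hbe Hbr Z HZin HZ X g h Hg Hh.
split; first exact: (@Zdiff _ _ _ _ _ _ _ _ _ _ Hac Hn0 Hsa Htout Hfd _ HZin HZ o t X).
move=> i; apply/rowP => j.
rewrite (@final_T _ _ _ _ _ _ _ _ _ _ _ _ Hac Hn0 Hsinj Hsa Hins Hto Htout Hfd Hal Hbe Hbr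
   _ HZin HZ _ _ Hh i j).
rewrite !mxE; congr (_ * _).
by rewrite /T Hg.
Qed.
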